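(* Let $a\in\mathit{Act}$ and let $m$ be a closed monitor. (1) If $m$ is $\mathit{no}$-free then $\mathcal{E}_v\vdash\mathit{yes}+a.m=\mathit{yes}$. (2) If $m$ contains occurrences of both $\mathit{yes}$ and $\mathit{no}$, then $\mathcal{E}_v\vdash\mathit{yes}+a.m=\mathit{yes}+a.n$ for some $\mathit{yes}$-free closed monitor $n$. (3) If $m$ is $\mathit{yes}$-free then $\mathcal{E}_v\vdash\mathit{no}+a.m=\mathit{no}$. (4) If $m$ contains occurrences of both $\mathit{yes}$ and $\mathit{no}$, then $\mathcal{E}_v\vdash\mathit{no}+a.m=\mathit{no}+a.n$ for some $\mathit{no}$-free closed monitor $n$.
   Context: Monitors: terms $m,n ::= v \mid a.m \mid m+n \mid x$ over a nonempty action set $\mathit{Act}$ and variables $x$, verdicts $v::=\mathit{end}\mid\mathit{yes}\mid\mathit{no}$; closed monitors contain no variables. A monitor is $v$-free if it contains no occurrence of the verdict $v$. $\mathcal{E}\vdash m=n$ denotes derivability by the rules of equational logic (reflexivity, symmetry, transitivity, substitution, congruence for $a.\_$ and $+$). $\mathcal{E}_v$ consists of (A1) $x+y=y+x$; (A2) $x+(y+z)=(x+y)+z$; (A3) $x+x=x$; (A4) $x+\mathit{end}=x$; and, for each $a\in\mathit{Act}$, ($E_a$) $a.\mathit{end}=\mathit{end}$; ($Y_a$) $\mathit{yes}=\mathit{yes}+a.\mathit{yes}$; ($N_a$) $\mathit{no}=\mathit{no}+a.\mathit{no}$; ($D_a$) $a.(x+y)=a.x+a.y$. *)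

(* Defs.v *)
From Stdlib Require Import List.

Inductive verdict : Type := vend | vyes | vno.

Inductive monitor (Act : Type) : Type :=
| mverd : verdict -> monitor Act
| mpre  : Act -> monitor Act -> monitor Act
| msum  : monitor Act -> monitor Act -> monitor Act
| mvar  : nat -> monitor Act.

Arguments mverd {Act} v.
Arguments mpre {Act} a m.
Arguments msum {Act} m n.
Arguments mvar {Act} x.

Definition mend {Act} : monitor Act := mverd vend.
Definition myes {Act} : monitor Act := mverd vyes.
Definition mno  {Act} : monitor Act := mverd vno.

Fixpoint closed {Act} (m : monitor Act) : Prop :=
  match m with
  | mverd _ => True
  | mpre _ m => closed m
  | msum m n => closed m /\ closed n
  | mvar _ => False
  end.

Fixpoint occurs {Act} (v : verdict) (m : monitor Act) : Prop :=
  match m with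
  | mverd w => w = v
  | mpre _ m => occurs v m
  | msum m n => occurs v m \/ occurs v n
  | mvar _ => False
  end.

Definition vfree {Act} (v : verdict) (m : monitor Act) : Prop := ~ occurs v m.

Fixpoint subst {Act} (s : nat -> monitor Act) (m : monitor Act) : monitor Act :=
  match m with
  | mverd v => mverd v
  | mpre a m => mpre a (subst s m)
  | msum m n => msum (subst s m) (subst s n)
  | mvar x => s x
  end.

Definition axioms (Act : Type) := monitor Act -> monitor Act -> Prop.

Inductive derives {Act} (E : axioms Act) : monitor Act -> monitor Act -> Prop :=
| d_ax    : forall l r (s : nat -> monitor Act), E l r -> derives E (subst s l) (subst s r)
| d_refl  : forall m, derives E m m
| d_sym   : forall m n, derives E m n -> derives E n m
| d_trans : forall m n p, derives E m n -> derives E n p -> derives E m p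
| d_pre   : forall a m n, derives E m n -> derives E (mpre a m) (mpre a n)
| d_sum   : forall m m' n n', derives E m m' -> derives E n n' ->
              derives E (msum m n) (msum m' n').

Definition vx {Act} : monitor Act := mvar 0.
Definition vy {Act} : monitor Act := mvar 1.
Definition vz {Act} : monitor Act := mvar 2.

Inductive Ev {Act : Type} : axioms Act :=
| A1 : Ev (msum vx vy) (msum vy vx)
| A2 : Ev (msum vx (msum vy vz)) (msum (msum vx vy) vz)
| A3 : Ev (msum vx vx) vx
| A4 : Ev (msum vx mend) vx
| Ea : forall a, Ev (mpre a mend) mend
| Ya : forall a, Ev myes (msum myes (mpre a myes))
| Na : forall a, Ev mno (msum mno (mpre a mno))
| Da : forall a, Ev (mpre a (msum vx vy)) (msum (mpre a vx) (mpre a vy)).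

(* Main.v *)
Require Import Defs.

Lemma verdict_eq (x y : verdict) : {x = y} + {x <> y}.
Proof. decide equality. Qed.

Section H.
Variable Act : Type.
Notation D := (@derives Act Ev).

Definition s3 (p q r : monitor Act) : nat -> monitor Act :=
  fun n => match n with 0 => p | 1 => q | _ => r end.

Lemma Dcomm p q : D (msum p q) (msum q p).
Proof. exact (d_ax Ev _ _ (s3 p q q) A1). Qed.
Lemma Dassoc p q r : D (msum p (msum q r)) (msum (msum p q) r).
Proof. exact (d_ax Ev _ _ (s3 p q r) A2). Qed.
Lemma Didem p : D (msum p p) p.
Proof. exact (d_ax Ev _ _ (s3 p p p) A3). Qed.
Lemma Dend p : D (msum p mend) p.
Proof. exact (d_ax Ev _ _ (s3 p p p) A4). Qed.
Lemma DEa a : D (mpre a mend) mend.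
Proof. exact (d_ax Ev _ _ (s3 mend mend mend) (Ea a)). Qed.
Lemma DDa a p q : D (mpre a (msum p q)) (msum (mpre a p) (mpre a q)).
Proof. exact (d_ax Ev _ _ (s3 p q q) (Da a)). Qed.

Variable v : verdict.
Hypothesis HV : forall a : Act, D (mverd v) (msum (mverd v) (mpre a (mverd v))).

Hypothesis Hvend : v <> vend.
Notation V := (@mverd Act v).

Lemma absorb a x : D (msum V x) (msum V (msum (mpre a V) x)).
Proof.
  eapply d_trans; [apply d_sum; [apply HV with (a:=a) | apply d_refl]|].
  apply d_sym, Dassoc.
Qed.

Lemma lem_pre a b p q : D (msum V (mpre b p)) (msum V (mpre b q)) ->
  D (msum V (mpre a (mpre b p))) (msum V (mpre a (mpre b q))).
Proof.
  intro H.
  assert (H1 : D (msum (mpre a V) (mpre a (mpre b p))) (msum (mpre a V) (mpre a (mpre b q)))).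
  { eapply d_trans; [apply d_sym, DDa|]. eapply d_trans; [|apply DDa]. apply d_pre, H. }
  eapply d_trans; [apply absorb with (a:=a)|].
  eapply d_trans; [|apply d_sym, absorb with (a:=a)].
  apply d_sum; [apply d_refl|exact H1].
Qed.

Lemma lem_sum x1 x2 y1 y2 : D (msum V x1) (msum V y1) -> D (msum V x2) (msum V y2) ->
  D (msum V (msum x1 x2)) (msum V (msum y1 y2)).
Proof.
  intros H1 H2.
  eapply d_trans; [apply Dassoc|].
  eapply d_trans; [apply d_sum; [exact H1|apply d_refl]|].
  eapply d_trans; [apply d_sym, Dassoc|].
  eapply d_trans; [apply d_sum; [apply d_refl|apply Dcomm]|].
  eapply d_trans; [apply Dassoc|].
  eapply d_trans; [apply d_sum; [exact H2|apply d_refl]|].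
  eapply d_trans; [apply d_sym, Dassoc|].
  apply d_sum; [apply d_refl|apply Dcomm].
Qed.

Lemma lem_sum_pre a m1 m2 n1 n2 :
  D (msum V (mpre a m1)) (msum V (mpre a n1)) ->
  D (msum V (mpre a m2)) (msum V (mpre a n2)) ->
  D (msum V (mpre a (msum m1 m2))) (msum V (mpre a (msum n1 n2))).
Proof.
  intros H1 H2.
  eapply d_trans; [apply d_sum; [apply d_refl|apply DDa]|].
  eapply d_trans; [|apply d_sum; [apply d_refl|apply d_sym, DDa]].
  apply lem_sum; assumption.
Qed.

Lemma Vend a : D (msum V (mpre a mend)) V.
Proof.
  eapply d_trans; [apply d_sum; [apply d_refl|apply DEa]|]. apply Dend.
Qed.

Lemma lemma1 m : closed m -> (forall w, occurs w m -> w = vend \/ w = v) ->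
  forall a, D (msum V (mpre a m)) (msum V (mpre a mend)).
Proof.
  induction m as [w|b m IH|m1 IH1 m2 IH2|x]; simpl; intros Hc Ho a.
  - destruct (Ho w eq_refl) as [->| ->].
    + apply d_refl.
    + eapply d_trans; [apply d_sym, HV|]. apply d_sym, Vend.
  - eapply d_trans; [apply lem_pre, IH; auto|].
    eapply d_trans; [apply d_sum; [apply d_refl|apply d_pre, DEa]|]. apply d_refl.
  - destruct Hc.
    eapply d_trans; [apply lem_sum_pre; [apply IH1|apply IH2]; auto|].
    apply d_sum; [apply d_refl|apply d_pre, Didem].
  - contradiction.
Qed.

Lemma lemma2 m : closed m -> exists n, closed n /\ ~ occurs v n /\
  forall a, D (msum V (mpre a m)) (msum V (mpre a n)).
Proof.
  induction m as [w|b m IH|m1 IH1 m2 IH2|x]; simpl; intros Hc.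
  - destruct (verdict_eq w v) as [->|Hne].
    + exists mend. simpl. split; [exact I|split].
      * unfold mend; simpl. intro E; apply Hvend; symmetry; exact E.
      * intro a. eapply d_trans; [apply d_sym, HV|]. apply d_sym, Vend.
    + exists (mverd w). simpl. auto using d_refl.
  - destruct (IH Hc) as [n [Hn1 [Hn2 Hn3]]]. exists (mpre b n). simpl.
    split; [exact Hn1|split; [exact Hn2|]]. intro a. apply lem_pre, Hn3.
  - destruct Hc as [Hc1 Hc2].
    destruct (IH1 Hc1) as [n1 [Ha1 [Hb1 Hd1]]].
    destruct (IH2 Hc2) as [n2 [Ha2 [Hb2 Hd2]]].
    exists (msum n1 n2). simpl. split; [auto|split; [tauto|]].
    intro a. apply lem_sum_pre; auto.
  - contradiction.
Qed.
End H.

Lemma HVy Act (a : Act) : derives Ev (@mverd Act vyes) (msum (mverd vyes) (mpre a (mverd vyes))).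
Proof. exact (d_ax Ev _ _ (fun _ => mend) (Ya a)). Qed.
Lemma HVn Act (a : Act) : derives Ev (@mverd Act vno) (msum (mverd vno) (mpre a (mverd vno))).
Proof. exact (d_ax Ev _ _ (fun _ => mend) (Na a)). Qed.

Theorem mainTheorem5 (Act : Type) (a : Act) (m : monitor Act) (Hc : closed m) :
  (vfree vno m -> derives Ev (msum myes (mpre a m)) myes) /\
  (occurs vyes m -> occurs vno m ->
     exists n, closed n /\ vfree vyes n /\
       derives Ev (msum myes (mpre a m)) (msum myes (mpre a n))) /\
  (vfree vyes m -> derives Ev (msum mno (mpre a m)) mno) /\
  (occurs vyes m -> occurs vno m ->
     exists n, closed n /\ vfree vno n /\
       derives Ev (msum mno (mpre a m)) (msum mno (mpre a n))).
Proof.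
  assert (Hocc : forall (o : verdict) (m : monitor Act), o <> vend -> ~ occurs o m -> forall w, occurs w m ->
     w = vend \/ w = (match o with vyes => vno | _ => vyes end)).
  { intros o m0 Ho Hn w Hw. destruct o; [congruence| |]; destruct w; auto; contradiction. }
  split; [|split; [|split]].
  - intro Hf. eapply d_trans.
    + apply (lemma1 Act vyes (HVy Act) m Hc (Hocc vno m ltac:(discriminate) Hf)).
    + apply Vend.
  - intros _ _. destruct (lemma2 Act vyes (HVy Act) ltac:(discriminate) m Hc)
      as [n [H1 [H2 H3]]]. exists n. auto.
  - intro Hf. eapply d_trans.
    + apply (lemma1 Act vno (HVn Act) m Hc (Hocc vyes m ltac:(discriminate) Hf)).
    + apply Vend.
  - intros _ _. destruct (lemma2 Act vno (HVn Act) ltac:(discriminate) m Hc)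
      as [n [H1 [H2 H3]]]. exists n. auto.
Qed.
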